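(* Let $g$, $h$, $(\delta_\varepsilon)_\varepsilon$ be as below and let $(x_\varepsilon)_\varepsilon\in C^\infty(\mathbb{R}^n\times\mathbb{R}^n\times\mathbb{R},\mathbb{R}^n)^{(0,1]}$ be an asymptotic solution of the initial value problem $(\ast)$. Then $(x_\varepsilon)_\varepsilon$ is uniformly bounded on compact subsets of $\mathbb{R}^n\times\mathbb{R}^n\times\mathbb{R}$, i.e., for every compact $M\subseteq\mathbb{R}^n\times\mathbb{R}^n\times\mathbb{R}$ there exist $C_M>0$ and $\varepsilon_1\in(0,1]$ with $\sup_{M}|x_\varepsilon|\le C_M$ for all $\varepsilon\le\varepsilon_1$.
   Context: $g\in C^\infty(\mathbb{R}^n,\mathbb{R}^n)$, $h\in C^\infty(\mathbb{R},\mathbb{R}^n)$, and $(\delta_\varepsilon)_{\varepsilon\in(0,1]}$ is a net of smooth real functions on $\mathbb{R}$ with $\operatorname{supp}\delta_\varepsilon\subseteq[-\varepsilon,\varepsilon]$ and $\int|\delta_\varepsilon|\le C$ for some $C>0$ and all small $\varepsilon$. The problem $(\ast)$ is: $\ddot x_\varepsilon(t)=g(x_\varepsilon(t))\delta_\varepsilon(t)+h(t)$, $x_\varepsilon(-1)=x_0$, $\dot x_\varepsilon(-1)=\dot x_0$. An asymptotic solution of $(\ast)$ is a net $(x_\varepsilon)_\varepsilon\in C^\infty(\mathbb{R}^n\times\mathbb{R}^n\times\mathbb{R},\mathbb{R}^n)^{(0,1]}$ such that for every compact $K\subseteq\mathbb{R}^{2n}$ there is $\varepsilon_K\in(0,1]$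 with the property that for all $(x_0,\dot x_0)\in K$ and $\varepsilon\le\varepsilon_K$, $t\mapsto x_\varepsilon(x_0,\dot x_0,t)$ solves $(\ast)$ on all of $\mathbb{R}$. *)

(* Defs.v *)
From Stdlib Require Import Reals List.
From mathcomp Require Import all_boot.
Open Scope R_scope.

Definition vec (m : nat) := 'I_m -> R.

Definition vnorm {m : nat} (v : vec m) : R :=
  sqrt (\big[Rplus/0]_(i < m) (v i * v i)).
Definition vsub {m : nat} (u v : vec m) : vec m := fun i => u i - v i.

Definition cont_Rm {m : nat} (F : vec m -> R) : Prop :=
  forall x eps, 0 < eps -> exists d, 0 < d /\
    forall y, vnorm (vsub y x) < d -> Rabs (F y - F x) < eps.

Definition upd {m : nat} (x : vec m) (j : 'I_m) (t : R) : vec m :=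
  fun i => if i == j then t else x i.

Fixpoint Ck {m : nat} (k : nat) (F : vec m -> R) : Prop :=
  match k with
  | O => cont_Rm F
  | S k' => cont_Rm F /\ forall j : 'I_m, exists dF : vec m -> R,
       (forall x, derivable_pt_lim (fun t => F (upd x j t)) (x j) (dF x)) /\ Ck k' dF
  end.

Definition smooth_Rm {m : nat} (F : vec m -> R) : Prop := forall k, Ck k F.
Definition smooth_map {m p : nat} (F : vec m -> vec p) : Prop :=
  forall i : 'I_p, smooth_Rm (fun v => F v i).
Definition smooth_R (f : R -> R) : Prop := smooth_Rm (fun v : vec 1 => f (v ord0)).

(* identification R^n x R^n = R^(n+n) and R^n x R^n x R = R^(n+n+1) *)
Definition q1 {n : nat} (w : vec (n + n)) : vec n := fun i => w (lshift n i).
Definition q2 {n : nat} (w : vec (n + n)) : vec n := fun i => w (rshift n i).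
Definition p1 {n : nat} (w : vec (n + n + 1)) : vec n :=
  fun i => w (lshift 1 (lshift n i)).
Definition p2 {n : nat} (w : vec (n + n + 1)) : vec n :=
  fun i => w (lshift 1 (rshift n i)).
Definition p3 {n : nat} (w : vec (n + n + 1)) : R := w (rshift (n + n) ord0).

Definition open_Rm {m : nat} (U : vec m -> Prop) : Prop :=
  forall x, U x -> exists r, 0 < r /\ forall y, vnorm (vsub y x) < r -> U y.
Definition compact_Rm {m : nat} (K : vec m -> Prop) : Prop :=
  forall (I : Type) (U : I -> vec m -> Prop),
    (forall i, open_Rm (U i)) ->
    (forall x, K x -> exists i, U i x) ->
    exists l : list I, forall x, K x -> exists i, List.In i l /\ U i x.

Definition solves_ivp {n : nat} (g : vec n -> vec n) (h : R -> vec n) (d : R -> R)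
  (x0 v0 : vec n) (x : R -> vec n) : Prop :=
  exists v : R -> vec n,
    (forall t i, derivable_pt_lim (fun s => x s i) t (v t i) /\
                 derivable_pt_lim (fun s => v s i) t (g (x t) i * d t + h t i)) /\
    (forall i, x (-1) i = x0 i) /\ (forall i, v (-1) i = v0 i).

(* asymptotic solution: the net (x_eps), eps in (0,1], of smooth maps
   R^n x R^n x R -> R^n, solving the IVP eventually, locally uniformly in
   the initial data *)
Definition asymptotic_solution {n : nat} (g : vec n -> vec n) (h : R -> vec n)
  (delta : R -> R -> R) (x : R -> vec n -> vec n -> R -> vec n) : Prop :=
  (forall eps, 0 < eps <= 1 ->
     smooth_map (fun w : vec (n + n + 1) => x eps (p1 w) (p2 w) (p3 w))) /\
  forall K : vec n -> vec n -> Prop,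
    compact_Rm (fun w : vec (n + n) => K (q1 w) (q2 w)) ->
    exists epsK, 0 < epsK <= 1 /\
      forall x0 v0 eps, K x0 v0 -> 0 < eps <= epsK ->
        solves_ivp g h (delta eps) x0 v0 (x eps x0 v0).

(* Main.v *)
Require Import Defs.
From HB Require Import structures.
From Stdlib Require Import Reals List Lra Lia Classical ClassicalEpsilon FunctionalExtensionality.
From mathcomp Require Import all_boot.
Open Scope R_scope.
Set Warnings "-notation-overridden".

Lemma RplusA : associative Rplus. Proof. move=> a b c; ring. Qed.
HB.instance Definition _ := Monoid.isComLaw.Build R 0 Rplus RplusA Rplus_comm Rplus_0_l.

Lemma sum_nonneg {m : nat} (P : pred 'I_m) (F : 'I_m -> R) :
  (forall i, 0 <= F i) -> 0 <= \big[Rplus/0]_(i < m | P i) F i.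
Proof.
move=> H; apply: (big_ind (fun x => 0 <= x)) => //; [lra| move=> a b ? ?; lra].
Qed.

Lemma coord_le_vnorm {m : nat} (v : vec m) (j : 'I_m) : Rabs (v j) <= vnorm v.
Proof.
rewrite /vnorm (bigD1 j) //=.
rewrite -sqrt_Rsqr_abs; apply sqrt_le_1_alt; rewrite /Rsqr.
rewrite -[X in X <= _]Rplus_0_r; apply Rplus_le_compat_l; apply sum_nonneg => i.
exact: Rle_0_sqr.
Qed.

Lemma sum_le {m : nat} (F1 F2 : 'I_m -> R) :
  (forall i, F1 i <= F2 i) -> \big[Rplus/0]_(i < m) F1 i <= \big[Rplus/0]_(i < m) F2 i.
Proof.
move=> H; apply: (big_ind2 (fun x y => x <= y)) => //; [lra | move=> a b c d ? ?; lra].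
Qed.

Lemma sum_const (m : nat) (c : R) : \big[Rplus/0]_(i < m) c = INR m * c.
Proof.
rewrite big_const_ord; elim: m => [|m IH]; first by rewrite /=; lra.
rewrite iterS IH S_INR; lra.
Qed.

Lemma fin_up {m : nat} (P : R -> 'I_m -> Prop) :
  (forall a b j, a <= b -> P a j -> P b j) -> (forall j, exists a, P a j) ->
  exists a, forall j, P a j.
Proof.
move=> Hm Hex.
have: forall s : seq 'I_m, exists a, forall j, j \in s -> P a j.
  elim=> [|x s [a Ha]]; first by exists 0.
  have [b Hb] := Hex x.
  exists (Rmax a b) => j; rewrite in_cons => /orP [/eqP -> | Hj].
  - apply: Hm Hb; apply Rmax_r.
  - apply: Hm (Ha j Hj); apply Rmax_l.
move=> /(_ (ord_enum m)) [a Ha]; exists a => j; apply Ha; apply mem_ord_enum.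
Qed.

Lemma fin_down {m : nat} (P : R -> 'I_m -> Prop) :
  (forall a b j, 0 < a -> a <= b -> P b j -> P a j) ->
  (forall j, exists a, 0 < a /\ P a j) ->
  exists a, 0 < a /\ forall j, P a j.
Proof.
move=> Hm Hex.
have: forall s : seq 'I_m, exists a, 0 < a /\ forall j, j \in s -> P a j.
  elim=> [|x s [a [Ha0 Ha]]]; first by exists 1; split => //; lra.
  have [b [Hb0 Hb]] := Hex x.
  exists (Rmin a b); split; first by apply Rmin_glb_lt.
  move=> j; rewrite in_cons => /orP [/eqP -> | Hj].
  - apply: Hm Hb; [by apply Rmin_glb_lt | apply Rmin_r].
  - apply: Hm (Ha j Hj); [by apply Rmin_glb_lt | apply Rmin_l].
move=> /(_ (ord_enum m)) [a [Ha0 Ha]]; exists a; split => // j; apply Ha; apply mem_ord_enum.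
Qed.

Lemma box_vnorm {m : nat} (y : vec m) (r : R) :
  (forall j, Rabs (y j) <= r) -> vnorm y <= sqrt (INR m * (r * r)).
Proof.
move=> H; rewrite /vnorm -sum_const; apply sqrt_le_1_alt; apply sum_le => i.
have E : y i * y i = Rabs (y i) * Rabs (y i).
  by rewrite -Rabs_mult Rabs_pos_eq //; apply Rle_0_sqr.
rewrite E; have := H i; have := Rabs_pos (y i) => ? ?.
apply Rmult_le_compat => //.
Qed.

Lemma cont_box {m : nat} (F : vec m -> R) : cont_Rm F ->
  forall p e, 0 < e -> exists r, 0 < r /\
    forall y, (forall j, Rabs (y j - p j) < r) -> Rabs (F y - F p) < e.
Proof.
move=> HF p e He; have [d [Hd Hy]] := HF p e He.
have Hm := pos_INR m.
exists (d / (INR m + 1)); split; first by apply Rdiv_lt_0_compat; lra.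
move=> y Hj; apply Hy.
set r := d / (INR m + 1).
have Hr : 0 < r by apply Rdiv_lt_0_compat; lra.
have Hrd : (INR m + 1) * r = d by rewrite /r; field; lra.
apply: Rle_lt_trans (@box_vnorm m (vsub y p) r _) _.
  by move=> j; apply Rlt_le; apply Hj.
rewrite -(sqrt_square d); last lra.
apply sqrt_lt_1_alt; split.
  apply Rmult_le_pos => //; apply Rle_0_sqr.
rewrite -Hrd.
have : INR m * (r * r) < (INR m + 1) * (INR m + 1) * (r * r).
  apply Rmult_lt_compat_r; first by apply Rmult_lt_0_compat.
  nra.
lra.
Qed.

Lemma smoothR_cont (f : R -> R) : smooth_R f -> forall s, continuity_pt f s.
Proof.
move=> Hf s; have Hc : cont_Rm (fun v : vec 1 => f (v ord0)) := Hf 0%nat.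
move=> e He; have [r [Hr Hy]] := cont_box _ Hc (fun _ => s) e He.
exists r; split => // y [_ Hys]; apply (Hy (fun _ => y)) => j; exact Hys.
Qed.

Lemma nonpos_deriv (f f' : R -> R) (a b : R) : a <= b ->
  (forall c, a < c < b -> derivable_pt_lim f c (f' c)) ->
  (forall c, a <= c <= b -> continuity_pt f c) ->
  (forall c, a < c < b -> f' c <= 0) -> f b <= f a.
Proof.
move=> Hab Hd Hc Hn.
case: (Req_dec a b) => [-> | Hne]; first lra.
have Hlt : a < b by lra.
pose pr1 := fun c (P : a < c < b) => exist (fun l => derivable_pt_abs f c l) (f' c) (Hd c P).
pose pr2 := fun c (P : a < c < b) => derivable_pt_id c.
have [c [P E]] := MVT f id a b pr1 pr2 Hlt Hc (fun c _ => derivable_continuous_pt _ _ (derivable_pt_id c)).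
rewrite /= derive_pt_id in E.
have := Hn c P; rewrite /id in E; nra.
Qed.

Lemma comp_deriv (f f' F F' : R -> R) (a b : R) : a <= b ->
  (forall c, a < c < b -> derivable_pt_lim f c (f' c)) ->
  (forall c, a < c < b -> derivable_pt_lim F c (F' c)) ->
  (forall c, a <= c <= b -> continuity_pt f c) ->
  (forall c, a <= c <= b -> continuity_pt F c) ->
  (forall c, a < c < b -> Rabs (f' c) <= F' c) -> Rabs (f b - f a) <= F b - F a.
Proof.
move=> Hab Hf HF Hcf HcF Hb.
have H1 : (fun s => f s - F s) b <= (fun s => f s - F s) a.
  apply (nonpos_deriv (fun s => f s - F s) (fun s => f' s - F' s) a b Hab).
  - move=> c Hc; apply derivable_pt_lim_minus; auto.
  - move=> c Hc; apply continuity_pt_minus; auto.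
  - move=> c Hc; have := Hb c Hc; have := Rle_abs (f' c); lra.
have H2 : (fun s => - f s - F s) b <= (fun s => - f s - F s) a.
  apply (nonpos_deriv (fun s => - f s - F s) (fun s => - f' s - F' s) a b Hab).
  - move=> c Hc; apply derivable_pt_lim_minus; auto; apply derivable_pt_lim_opp; auto.
  - move=> c Hc; apply continuity_pt_minus; auto; apply continuity_pt_opp; auto.
  - move=> c Hc; have := Hb c Hc; have := Rle_abs (- f' c); rewrite Rabs_Ropp; lra.
simpl in H1, H2; apply Rabs_le; lra.
Qed.

Lemma lip (f f' : R -> R) (a b L : R) : a <= b ->
  (forall c, derivable_pt_lim f c (f' c)) ->
  (forall c, a < c < b -> Rabs (f' c) <= L) -> Rabs (f b - f a) <= L * (b - a).
Proof.
move=> Hab Hd Hb.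
have Hc : forall c, continuity_pt f c.
  move=> c; apply: (derivable_continuous_pt _ _ (exist _ (f' c) (Hd c))).
have HL : forall c, derivable_pt_lim (fun s => L * s) c L.
  move=> c; have := derivable_pt_lim_scal id L c 1 (derivable_pt_lim_id c).
  by rewrite Rmult_1_r.
have HLc : forall c, continuity_pt (fun s => L * s) c.
  move=> c; apply: (derivable_continuous_pt _ _ (exist _ L (HL c))).
have := comp_deriv f f' (fun s => L * s) (fun _ => L) a b Hab (fun c _ => Hd c)
  (fun c _ => HL c) (fun c _ => Hc c) (fun c _ => HLc c) Hb.
move=> H; lra.
Qed.

Lemma in_le_sum (l : list nat) (k : nat) : List.In k l -> (k <= fold_right Nat.add 0%nat l)%coq_nat.
Proof.
elim: l => [|a l IH] /=; first by [].
case=> [->|H]; first lia.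
have := IH H; lia.
Qed.

Lemma compact_bounded {m : nat} (S : vec m -> Prop) : compact_Rm S ->
  exists R0, 0 <= R0 /\ forall w, S w -> forall j, Rabs (w j) <= R0.
Proof.
move=> HS.
destruct (HS nat (fun k w => forall j, Rabs (w j) < INR k)) as [l Hl].
- move=> k w Hw.
  destruct (@fin_down m (fun r j => forall y, vnorm (vsub y w) < r -> Rabs (y j) < INR k)) as [r [Hr Hy]].
  + move=> a b j Ha Hab Hb y Hy; apply Hb; lra.
  + move=> j; exists (INR k - Rabs (w j)); split; first by have := Hw j; lra.
    move=> y Hy; have H1 : Rabs (y j - w j) <= vnorm (vsub y w) := coord_le_vnorm (vsub y w) j.
    have H2 := Rabs_triang (y j - w j) (w j).
    replace (y j - w j + w j) with (y j) in H2 by ring; lra.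
  + by exists r; split => // y Hyw j; apply Hy.
- move=> w _.
  destruct (@fin_up m (fun a j => Rabs (w j) <= a)) as [B HB].
    by move=> a b j; lra.
    by move=> j; exists (Rabs (w j)); apply Rle_refl.
  have [k Hk] := INR_unbounded B; exists k => j; have := HB j; lra.
- exists (INR (fold_right Nat.add 0%nat l)); split; first by apply pos_INR.
  move=> w Sw j; have [k [Hk Uk]] := Hl w Sw.
  apply Rlt_le; apply: Rlt_le_trans (Uk j) _; apply le_INR; exact: in_le_sum.
Qed.

Definition pre {n : nat} (w : vec (n + n + 1)) : vec (n + n) := fun i => w (lshift 1 i).
Definition ext {n : nat} (w : vec (n + n)) (t : R) : vec (n + n + 1) :=
  fun i => match split i with inl a => w a | inr _ => t end.
Definition join2 {n : nat} (x0 v0 : vec n) : vec (n + n) :=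
  fun i => match split i with inl a => x0 a | inr b => v0 b end.

Lemma split_l {a b : nat} (i : 'I_a) : split (lshift b i) = inl i.
Proof. exact: (unsplitK (inl i)). Qed.
Lemma split_r {a b : nat} (i : 'I_b) : split (rshift a i) = inr i.
Proof. exact: (unsplitK (inr i)). Qed.

Lemma pre_ext {n : nat} (w : vec (n + n)) t : pre (ext w t) = w.
Proof. apply functional_extensionality => i; by rewrite /pre /ext split_l. Qed.
Lemma p1_ext {n : nat} (w : vec (n + n)) t : p1 (ext w t) = q1 w.
Proof. apply functional_extensionality => i; by rewrite /p1 /ext split_l. Qed.
Lemma p2_ext {n : nat} (w : vec (n + n)) t : p2 (ext w t) = q2 w.
Proof. apply functional_extensionality => i; by rewrite /p2 /ext split_l. Qed.
Lemma p3_ext {n : nat} (w : vec (n + n)) t : p3 (ext w t) = t.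
Proof. by rewrite /p3 /ext split_r. Qed.
Lemma q1_join {n : nat} (x0 v0 : vec n) : q1 (join2 x0 v0) = x0.
Proof. apply functional_extensionality => i; by rewrite /q1 /join2 split_l. Qed.
Lemma q2_join {n : nat} (x0 v0 : vec n) : q2 (join2 x0 v0) = v0.
Proof. apply functional_extensionality => i; by rewrite /q2 /join2 split_r. Qed.

Lemma vnorm_pre {n : nat} (y x : vec (n + n + 1)) :
  vnorm (vsub (pre y) (pre x)) <= vnorm (vsub y x).
Proof.
rewrite /vnorm [X in _ <= sqrt X]big_split_ord /=; apply sqrt_le_1_alt.
rewrite -[X in X <= _]Rplus_0_r; apply Rplus_le_compat_l; apply sum_nonneg => i.
exact: Rle_0_sqr.
Qed.

Lemma compact_proj {n : nat} (M : vec n -> vec n -> R -> Prop) :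
  compact_Rm (fun w : vec (n + n + 1) => M (p1 w) (p2 w) (p3 w)) ->
  compact_Rm (fun w : vec (n + n) => exists t, M (q1 w) (q2 w) t).
Proof.
move=> HM I U HU Hcov.
destruct (HM I (fun i w => U i (pre w))) as [l Hl].
- move=> i x Hx; have [r [Hr Hy]] := HU i (pre x) Hx.
  exists r; split => // y Hyx; apply Hy; apply: Rle_lt_trans (vnorm_pre y x) Hyx.
- move=> w Hw; apply Hcov; by exists (p3 w).
- exists l => w [t Ht].
  have := Hl (ext w t); rewrite p1_ext p2_ext p3_ext pre_ext; by apply.
Qed.

Lemma le_eps_le (x y : R) : (forall e, 0 < e -> x <= y + e) -> x <= y.
Proof.
move=> H; apply Rnot_lt_le => Hc; have := H ((x - y) / 2); lra.
Qed.

Lemma ek_anti (E0 : R) (N k : nat) : 0 < E0 -> (N <= k)%coq_nat ->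
  E0 / (INR k + 1) <= E0 / (INR N + 1).
Proof.
move=> HE Hk; have := le_INR _ _ Hk; have := pos_INR N => ? ?.
apply Rmult_le_compat_l; first lra.
apply Rinv_le_contravar; lra.
Qed.

Lemma ek_small (E0 e : R) : 0 < E0 -> 0 < e -> exists N : nat, E0 / (INR N + 1) < e.
Proof.
move=> HE He; have [N HN] := INR_unbounded (E0 / e); exists N.
have := pos_INR N => ?.
apply (Rmult_lt_reg_r (INR N + 1)); first lra.
rewrite /Rdiv Rmult_assoc Rinv_l; last lra.
rewrite Rmult_1_r.
have : E0 < e * INR N.
  have := Rmult_lt_compat_l e _ _ He HN; rewrite /Rdiv.
  by rewrite (Rmult_comm E0) -Rmult_assoc Rinv_r ?Rmult_1_l; lra.
nra.
Qed.

Lemma limit_point (u : R -> R) (V E0 : R) : 0 <= V -> 0 < E0 ->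
  (forall e1 e2, 0 < e2 -> e2 <= e1 -> e1 <= E0 -> Rabs (u e2 - u e1) <= V * e1) ->
  exists l, forall e, 0 < e -> e <= E0 -> Rabs (u e - l) <= V * e.
Proof.
move=> HV HE Hc.
pose ek := fun k : nat => E0 / (INR k + 1).
have ek_pos : forall k, 0 < ek k.
  move=> k; apply Rdiv_lt_0_compat => //; have := pos_INR k; lra.
have ek_le : forall k, ek k <= E0.
  move=> k; have := ek_anti E0 0 k HE (Nat.le_0_l k); rewrite /ek /= /Rdiv; lra.
have Hcau : Cauchy_crit (fun k => u (ek k)).
  move=> e He.
  have [N HN] := ek_small E0 _ HE (Rdiv_lt_0_compat e (2 * V + 1) He ltac:(lra)).
  exists N => p q Hp Hq; rewrite /Rdist.
  have HNe : (2 * V + 1) * ek N < e.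
    move: HN; rewrite /ek => HN.
    apply (Rmult_lt_compat_l (2 * V + 1)) in HN; last lra.
    replace ((2 * V + 1) * (e / (2 * V + 1))) with e in HN by (field; lra); lra.
  have H1 := Hc (ek N) (ek p) (ek_pos p) (ek_anti E0 N p HE Hp) (ek_le N).
  have H2 := Hc (ek N) (ek q) (ek_pos q) (ek_anti E0 N q HE Hq) (ek_le N).
  have := Rabs_triang (u (ek p) - u (ek N)) (u (ek N) - u (ek q)).
  replace (u (ek p) - u (ek N) + (u (ek N) - u (ek q))) with (u (ek p) - u (ek q)) by ring.
  rewrite Rabs_minus_sym in H2. have := ek_pos N. nra.
have [l Hl] := R_complete _ Hcau.
exists l => e He HeE; apply le_eps_le => eps Heps.
have [N1 HN1] := Hl eps Heps.
have [N2 HN2] := ek_small E0 e HE He.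
pose k := Nat.max N1 N2.
have Hk1 := HN1 k (Nat.le_max_l N1 N2).
have Hk2 : ek k <= e.
  have := ek_anti E0 N2 k HE (Nat.le_max_r N1 N2); rewrite /ek in HN2 *; lra.
have H3 := Hc e (ek k) (ek_pos k) Hk2 HeE.
rewrite /Rdist in Hk1.
have := Rabs_triang (u e - u (ek k)) (u (ek k) - l).
replace (u e - u (ek k) + (u (ek k) - l)) with (u e - l) by ring.
rewrite Rabs_minus_sym in H3; lra.
Qed.

Definition sol {n : nat} (g : vec n -> vec n) (h : R -> vec n) (d : R -> R)
  (a b : vec n) (X V : R -> vec n) : Prop :=
  (forall t i, derivable_pt_lim (fun s => X s i) t (V t i) /\
               derivable_pt_lim (fun s => V s i) t (g (X t) i * d t + h t i)) /\
  (forall i, X (-1) i = a i) /\ (forall i, V (-1) i = b i).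

Lemma free_vel {n : nat} g h d (a b : vec n) X V (i : 'I_n) s0 s1 Hb :
  sol g h d a b X V -> s0 <= s1 -> (forall c, s0 < c < s1 -> d c = 0) ->
  (forall c, s0 < c < s1 -> Rabs (h c i) <= Hb) -> Rabs (V s1 i - V s0 i) <= Hb * (s1 - s0).
Proof.
move=> [Hd _] Hs Hz Hh.
apply (lip (fun s => V s i) (fun c => g (X c) i * d c + h c i)) => //.
  by move=> c; case: (Hd c i).
by move=> c Hc; rewrite (Hz c Hc) Rmult_0_r Rplus_0_l; auto.
Qed.

Lemma pos_lip {n : nat} g h d (a b : vec n) X V (i : 'I_n) s0 s1 L :
  sol g h d a b X V -> s0 <= s1 -> (forall c, s0 < c < s1 -> Rabs (V c i) <= L) ->
  Rabs (X s1 i - X s0 i) <= L * (s1 - s0).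
Proof.
move=> [Hd _] Hs Hb.
apply (lip (fun s => X s i) (fun c => V c i)) => //.
by move=> c; case: (Hd c i).
Qed.

Lemma aff {n : nat} g h d1 d2 (a1 b1 a2 b2 : vec n) X1 V1 X2 V2 (i : 'I_n) s :
  sol g h d1 a1 b1 X1 V1 -> sol g h d2 a2 b2 X2 V2 -> -1 <= s ->
  (forall c, -1 < c < s -> d1 c = 0 /\ d2 c = 0) ->
  Rabs (X1 s i - X2 s i) <= Rabs (a1 i - a2 i) + (s + 1) * Rabs (b1 i - b2 i).
Proof.
move=> [Hd1 [Ha1 Hb1]] [Hd2 [Ha2 Hb2]] Hs Hz.
have HD : forall c, -1 <= c <= s -> V1 c i - V2 c i = b1 i - b2 i.
  move=> c Hc.
  have HD1 : forall t, derivable_pt_lim (fun t => V1 t i - V2 t i) t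
      ((g (X1 t) i * d1 t + h t i) - (g (X2 t) i * d2 t + h t i)).
    move=> t; apply derivable_pt_lim_minus; [case: (Hd1 t i) | case: (Hd2 t i)] => //.
  have HD2 : forall c', -1 < c' < c ->
      Rabs ((g (X1 c') i * d1 c' + h c' i) - (g (X2 c') i * d2 c' + h c' i)) <= 0.
    move=> c' Hc'; have [-> ->] := Hz c' ltac:(lra).
    rewrite !Rmult_0_r !Rplus_0_l Rminus_diag Rabs_R0; lra.
  have H := lip _ _ (-1) c 0 ltac:(lra) HD1 HD2.
  simpl in H; rewrite Rmult_0_l in H.
  have H0 := Rle_abs (V1 c i - V2 c i - (V1 (-1) i - V2 (-1) i)).
  have H1 := Rle_abs (- (V1 c i - V2 c i - (V1 (-1) i - V2 (-1) i))).
  rewrite Rabs_Ropp in H1; rewrite Hb1 Hb2 in H0 H1 H; lra.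
have HDer : forall t, derivable_pt_lim (fun t => X1 t i - X2 t i) t (V1 t i - V2 t i).
  move=> t; apply derivable_pt_lim_minus; [case: (Hd1 t i) | case: (Hd2 t i)] => //.
have HBd : forall c, -1 < c < s -> Rabs (V1 c i - V2 c i) <= Rabs (b1 i - b2 i).
  move=> c0 Hc0; rewrite HD; [lra | lra].
have H := lip (fun t => X1 t i - X2 t i) (fun t => V1 t i - V2 t i) (-1) s (Rabs (b1 i - b2 i)) Hs HDer HBd.
simpl in H; rewrite Ha1 Ha2 in H.
have := Rabs_triang (a1 i - a2 i) (X1 s i - X2 s i - (a1 i - a2 i)).
replace (a1 i - a2 i + (X1 s i - X2 s i - (a1 i - a2 i))) with (X1 s i - X2 s i) by ring.
replace (s - -1) with (s + 1) in H by ring; lra.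
Qed.

Lemma cont_pt_eps (f : R -> R) (x : R) : continuity_pt f x ->
  forall e, 0 < e -> exists d, 0 < d /\ forall y, Rabs (y - x) < d -> Rabs (f y - f x) < e.
Proof.
move=> Hc e He; have [d [Hd H]] := Hc e He.
exists d; split => // y Hy; case: (Req_dec y x) => [->|Hne].
  by rewrite Rminus_diag Rabs_R0.
apply (H y); split; [split; [constructor | auto] | exact Hy].
Qed.

Lemma prim_bound (d : R -> R) (eps C : R) :
  (forall s, continuity_pt d s) -> 0 < eps -> eps <= 1 ->
  (forall pr : Riemann_integrable (fun t => Rabs (d t)) (- eps) eps, RiemannInt pr <= C) ->
  exists F, (forall c, -eps < c < eps -> derivable_pt_lim F c (Rabs (d c))) /\
    (forall c, -eps <= c <= eps -> continuity_pt F c) /\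
    (forall a b, -eps <= a -> a <= b -> b <= eps -> F b - F a <= C).
Proof.
move=> Hd He He1 HC.
pose f := fun t => Rabs (d t).
have Cf : forall x, continuity_pt f x.
  move=> x; apply (continuity_pt_comp d Rabs x (Hd x) (Rcontinuity_abs (d x))).
have h1 : -1 <= 1 by lra.
have C0 : forall x, -1 <= x <= 1 -> continuity_pt f x by move=> x _; apply Cf.
pose F := primitive h1 (FTC_P1 h1 C0).
have HF : forall c, -1 <= c <= 1 -> derivable_pt_lim F c (f c).
  move=> c Hc; exact: RiemannInt_P28.
have HFc : forall c, -1 <= c <= 1 -> continuity_pt F c.
  move=> c Hc; apply: (derivable_continuous_pt _ _ (exist _ (f c) (HF c Hc))).
exists F; split; [|split].
- move=> c Hc; apply HF; lra.
- move=> c Hc; apply HFc; lra.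
move=> a b Ha Hab Hb.
have Hmono : forall u v, -1 <= u -> u <= v -> v <= 1 -> F u <= F v.
  move=> u v Hu Huv Hv.
  suff : - F v <= - F u by lra.
  apply (nonpos_deriv (fun t => - F t) (fun t => - f t) u v Huv).
  + move=> c Hc; apply derivable_pt_lim_opp; apply HF; lra.
  + move=> c Hc; apply continuity_pt_opp; apply HFc; lra.
  + move=> c Hc; have := Rabs_pos (d c); rewrite /f; lra.
have H1 := Hmono b eps ltac:(lra) Hb He1.
have H2 := Hmono (-eps) a ltac:(lra) Ha ltac:(lra).
suff : F eps - F (- eps) <= C by lra.
have pr2 : Riemann_integrable f (- eps) eps.
  apply continuity_implies_RiemannInt; [lra | move=> x _; apply Cf].
rewrite /F /primitive.
case: (Rle_dec (-1) eps) => r1; last lra.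
case: (Rle_dec eps 1) => r2; last lra.
case: (Rle_dec (-1) (-eps)) => r3; last lra.
case: (Rle_dec (-eps) 1) => r4; last lra.
have := RiemannInt_P26 (FTC_P1 h1 C0 r3 r4) pr2 (FTC_P1 h1 C0 r1 r2).
move=> B; have A' : RiemannInt pr2 <= C := HC pr2.
lra.
Qed.

Lemma dlin (G Hb : R) (F : R -> R) c l : derivable_pt_lim F c l ->
  derivable_pt_lim (fun t => G * F t + Hb * t) c (G * l + Hb).
Proof.
move=> H.
have H2 : derivable_pt_lim (fun t => Hb * t) c Hb.
  have := derivable_pt_lim_scal id Hb c 1 (derivable_pt_lim_id c); by rewrite Rmult_1_r.
exact: (derivable_pt_lim_plus (fun t => G * F t) (fun t => Hb * t) c _ _
  (derivable_pt_lim_scal F G c l H) H2).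
Qed.

Lemma kick_est {n : nat} (g : vec n -> vec n) h d (a b : vec n) X V (p : vec n)
  (eps rho G Hb C V0 : R) (F : R -> R) (bb : R) :
  sol g h d a b X V -> 0 < eps -> 0 <= G -> 0 <= Hb ->
  (forall y, (forall j, Rabs (y j - p j) < rho) -> forall i, Rabs (g y i) <= G) ->
  (forall c, -eps <= c <= eps -> forall i, Rabs (h c i) <= Hb) ->
  (forall c, -eps < c < eps -> derivable_pt_lim F c (Rabs (d c))) ->
  (forall c, -eps <= c <= eps -> continuity_pt F c) ->
  (forall a b, -eps <= a -> a <= b -> b <= eps -> F b - F a <= C) ->
  (forall i, Rabs (V (-eps) i) <= V0) ->
  -eps <= bb -> bb <= eps ->
  (forall c, -eps < c < bb -> forall j, Rabs (X c j - p j) < rho) ->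
  forall s, -eps <= s <= bb -> forall i,
    Rabs (V s i - V (-eps) i) <= G * C + Hb * (2 * eps) /\
    Rabs (X s i - X (-eps) i) <= (V0 + G * C + Hb * (2 * eps)) * (s + eps).
Proof.
move=> Hsol He HG HHb Hg Hh HF HFc HFC HV0 Hbb1 Hbb2 Hbox.
have Hsol' := Hsol; case: Hsol' => [Hd _].
have HVpart : forall s, -eps <= s <= bb -> forall i,
    Rabs (V s i - V (-eps) i) <= G * C + Hb * (2 * eps).
  move=> s Hs i.
  have Hcf : forall c, continuity_pt (fun t => V t i) c.
    move=> c; case: (Hd c i) => _ H; exact: (derivable_continuous_pt _ _ (exist _ _ H)).
  have HFd : forall c, -eps < c < s -> derivable_pt_lim (fun t => G * F t + Hb * t) c (G * Rabs (d c) + Hb).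
    move=> c Hc; apply dlin; apply HF; lra.
  have Hes : -eps <= s by lra.
  have H := comp_deriv (fun t => V t i) (fun c => g (X c) i * d c + h c i)
    (fun t => G * F t + Hb * t) (fun c => G * Rabs (d c) + Hb) (-eps) s Hes
    (fun c _ => proj2 (Hd c i)) HFd (fun c _ => Hcf c).
  have HC := HFC (-eps) s ltac:(lra) ltac:(lra) ltac:(lra).
  apply: Rle_trans; first apply H.
  - move=> c Hc; apply continuity_pt_plus.
    + apply continuity_pt_scal; apply HFc; lra.
    + apply continuity_pt_scal; apply derivable_continuous_pt; apply derivable_pt_id.
  - move=> c Hc; apply: Rle_trans (Rabs_triang _ _) _.
    rewrite Rabs_mult; apply Rplus_le_compat.
    + apply Rmult_le_compat_r; first apply Rabs_pos.
      apply Hg => j; apply Hbox; lra.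
    + apply Hh; lra.
  - simpl. have : G * (F s - F (- eps)) <= G * C by apply Rmult_le_compat_l.
    nra.
move=> s Hs i; split; first by apply HVpart.
have := pos_lip g h d a b X V i (-eps) s (V0 + G * C + Hb * (2 * eps)) Hsol ltac:(lra).
replace (s - - eps) with (s + eps) by ring; apply.
move=> c Hc; have := HVpart c ltac:(lra) i; have := HV0 i.
have := Rabs_triang (V (-eps) i) (V c i - V (-eps) i).
replace (V (- eps) i + (V c i - V (- eps) i)) with (V c i) by ring; lra.
Qed.

Lemma kick {n : nat} (g : vec n -> vec n) h d (a b : vec n) X V (p : vec n)
  (eps rho G Hb C V0 : R) (F : R -> R) :
  sol g h d a b X V -> 0 < eps -> 0 < rho -> 0 <= G -> 0 <= Hb -> 0 <= V0 ->
  (forall y, (forall j, Rabs (y j - p j) < rho) -> forall i, Rabs (g y i) <= G) ->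
  (forall c, -eps <= c <= eps -> forall i, Rabs (h c i) <= Hb) ->
  (forall c, -eps < c < eps -> derivable_pt_lim F c (Rabs (d c))) ->
  (forall c, -eps <= c <= eps -> continuity_pt F c) ->
  (forall a b, -eps <= a -> a <= b -> b <= eps -> F b - F a <= C) ->
  (forall i, Rabs (V (-eps) i) <= V0) ->
  (forall j, Rabs (X (-eps) j - p j) <= rho / 4) ->
  (V0 + G * C + Hb * (2 * eps)) * (2 * eps) <= rho / 8 ->
  forall s, -eps <= s <= eps -> forall i,
    Rabs (V s i - V (-eps) i) <= G * C + Hb * (2 * eps) /\
    Rabs (X s i - X (-eps) i) <= (V0 + G * C + Hb * (2 * eps)) * (s + eps).
Proof.
move=> Hsol He Hr HG HHb HV0p Hg Hh HF HFc HFC HV0 Hstart Hsmall.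
set W := V0 + G * C + Hb * (2 * eps).
have HC0 : 0 <= C by have := HFC (-eps) (-eps) ltac:(lra) ltac:(lra) ltac:(lra); lra.
have HW : 0 <= W by rewrite /W; have := Rmult_le_pos G C HG HC0; have := Rmult_le_pos Hb (2 * eps) HHb ltac:(lra); lra.
pose E := fun bb => -eps <= bb <= eps /\
  forall c, -eps <= c < bb -> forall j, Rabs (X c j - p j) < rho / 2.
have HEb : bound E by exists eps => x [Hx _]; lra.
have HE0 : exists x, E x by exists (-eps); split; [lra | move=> c Hc; lra].
have [beta [Hub Hlub]] := completeness E HEb HE0.
have Hb1 : -eps <= beta by apply Hub; case: HE0 => x Ex; have := Hub x Ex; case: Ex => [[? ?] _]; split; [lra | move=> c Hc; lra].
have Hb2 : beta <= eps by apply Hlub => x [Hx _]; lra.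
have claim1 : forall c, -eps <= c < beta -> forall j, Rabs (X c j - p j) < rho / 2.
  move=> c Hc; apply NNPP => nok; exfalso.
  have : beta <= c.
    apply Hlub => bb [Hbb1 Hbb2]; apply Rnot_lt_le => Hlt; apply nok; apply Hbb2; lra.
  lra.
have Hbox : forall c, -eps < c < beta -> forall j, Rabs (X c j - p j) < rho.
  move=> c Hc j; have := claim1 c ltac:(lra) j; lra.
have Hest := @kick_est n g h d a b X V p eps rho G Hb C V0 F beta Hsol He HG HHb Hg Hh HF HFc HFC HV0 Hb1 Hb2 Hbox.
have Hclose : forall s, -eps <= s <= beta -> forall j, Rabs (X s j - p j) <= 3 * rho / 8.
  move=> s Hs j; have [_ H2] := Hest s Hs j; have := Hstart j.
  have : W * (s + eps) <= W * (2 * eps) by apply Rmult_le_compat_l; lra.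
  have := Rabs_triang (X s j - X (-eps) j) (X (-eps) j - p j).
  replace (X s j - X (- eps) j + (X (- eps) j - p j)) with (X s j - p j) by ring.
  rewrite /W in H2 *; lra.
have Hbeta : eps <= beta.
  apply Rnot_lt_le => Hlt.
  have Hcont : forall j, continuity_pt (fun t => X t j) beta.
    move=> j; case: Hsol => [Hd _]; case: (Hd beta j) => H _.
    exact: (derivable_continuous_pt _ _ (exist _ _ H)).
  destruct (@fin_down n (fun r j => forall y, Rabs (y - beta) < r -> Rabs (X y j - X beta j) < rho / 16)) as [r [Hr0 Hrj]].
  + move=> a0 b0 j Ha Hab H y Hy; apply H; lra.
  + move=> j; have [dd [Hdd H]] := cont_pt_eps _ _ (Hcont j) (rho / 16) ltac:(lra).
    by exists dd; split.
  have : beta + Rmin (r / 2) (eps - beta) <= beta.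
    apply Hub; split.
      split; [have := Rmin_r (r / 2) (eps - beta); have : 0 < Rmin (r / 2) (eps - beta) by apply Rmin_glb_lt; lra|]; first lra.
      have := Rmin_r (r / 2) (eps - beta); lra.
    move=> c Hc j; case: (Rlt_le_dec c beta) => Hcb; first by apply claim1; lra.
    have Hcr : Rabs (c - beta) < r.
      have := Rmin_l (r / 2) (eps - beta); rewrite Rabs_pos_eq; lra.
    have := Hrj j c Hcr; have := Hclose beta ltac:(lra) j.
    have := Rabs_triang (X c j - X beta j) (X beta j - p j).
    replace (X c j - X beta j + (X beta j - p j)) with (X c j - p j) by ring; lra.
  have : 0 < Rmin (r / 2) (eps - beta) by apply Rmin_glb_lt; lra.
  lra.
move=> s Hs i; apply Hest; lra.
Qed.

Lemma free_phase {n : nat} (g : vec n -> vec n) h (d : R -> R) (x0 v0 : vec n) X Vv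
  (eps R0 T Hb : R) :
  sol g h d x0 v0 X Vv -> 0 < eps -> eps < 1 -> 1 <= T -> 0 <= Hb ->
  (forall t, eps < Rabs t -> d t = 0) ->
  (forall c, -T <= c <= T -> forall i, Rabs (h c i) <= Hb) ->
  (forall j, Rabs (x0 j) <= R0 /\ Rabs (v0 j) <= R0) ->
  forall s, -T <= s <= -eps -> forall i,
    Rabs (Vv s i) <= R0 + Hb * (2 * T) /\
    Rabs (X s i - x0 i) <= (R0 + Hb * (2 * T)) * (2 * T).
Proof.
move=> Hsol He He1 HT HHb Hd Hh H0.
have Hsol' := Hsol; case: Hsol' => [_ [HX0 HV0]].
have HVb : forall s, -T <= s <= -eps -> forall i, Rabs (Vv s i) <= R0 + Hb * (2 * T).
  move=> s Hs i.
  have Hv0 := proj2 (H0 i).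
  have Hd1 : forall c, -1 < c -> c < -eps -> d c = 0.
    move=> c Hc1 Hc2; apply Hd; rewrite Rabs_left; lra.
  have Hd2 : forall c, c < -1 -> d c = 0.
    move=> c Hc; apply Hd; rewrite Rabs_left; lra.
  case: (Rle_lt_dec (-1) s) => Hs1.
  - have := free_vel g h d x0 v0 X Vv i (-1) s Hb Hsol Hs1 _ _.
    move=> /(_ (fun c Hc => Hd1 c (proj1 Hc) ltac:(lra))).
    move=> /(_ (fun c Hc => Hh c ltac:(lra) i)).
    rewrite HV0 => H.
    have := Rabs_triang (v0 i) (Vv s i - v0 i).
    replace (v0 i + (Vv s i - v0 i)) with (Vv s i) by ring.
    have : Hb * (s - -1) <= Hb * (2 * T) by apply Rmult_le_compat_l; lra.
    lra.
  - have Hsl : s <= -1 by lra.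
    have := free_vel g h d x0 v0 X Vv i s (-1) Hb Hsol Hsl _ _.
    move=> /(_ (fun c Hc => Hd2 c (proj2 Hc))).
    move=> /(_ (fun c Hc => Hh c ltac:(lra) i)).
    rewrite HV0 Rabs_minus_sym => H.
    have := Rabs_triang (v0 i) (Vv s i - v0 i).
    replace (v0 i + (Vv s i - v0 i)) with (Vv s i) by ring.
    have : Hb * (-1 - s) <= Hb * (2 * T) by apply Rmult_le_compat_l; lra.
    lra.
move=> s Hs i; split; first by apply HVb.
have HR : 0 <= R0 + Hb * (2 * T).
  have := Rabs_pos (Vv s i); have := HVb s Hs i; lra.
case: (Rle_lt_dec (-1) s) => Hs1.
- have := pos_lip g h d x0 v0 X Vv i (-1) s (R0 + Hb * (2 * T)) Hsol Hs1.
  move=> /(_ (fun c Hc => HVb c ltac:(lra) i)); rewrite HX0 => H.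
  have : (R0 + Hb * (2 * T)) * (s - -1) <= (R0 + Hb * (2 * T)) * (2 * T).
    by apply Rmult_le_compat_l; lra.
  lra.
- have Hsl : s <= -1 by lra.
  have := pos_lip g h d x0 v0 X Vv i s (-1) (R0 + Hb * (2 * T)) Hsol Hsl.
  move=> /(_ (fun c Hc => HVb c ltac:(lra) i)); rewrite HX0 Rabs_minus_sym => H.
  have : (R0 + Hb * (2 * T)) * (-1 - s) <= (R0 + Hb * (2 * T)) * (2 * T).
    by apply Rmult_le_compat_l; lra.
  lra.
Qed.

Lemma post_phase {n : nat} (g : vec n -> vec n) h (d : R -> R) (x0 v0 : vec n) X Vv
  (eps T Hb W1 : R) :
  sol g h d x0 v0 X Vv -> 0 < eps -> eps <= T -> 0 <= Hb ->
  (forall t, eps < Rabs t -> d t = 0) ->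
  (forall c, -T <= c <= T -> forall i, Rabs (h c i) <= Hb) ->
  (forall i, Rabs (Vv eps i) <= W1) ->
  forall s, eps <= s <= T -> forall i,
    Rabs (X s i - X eps i) <= (W1 + Hb * (2 * T)) * (2 * T).
Proof.
move=> Hsol He HT HHb Hd Hh HW.
have HVb : forall s, eps <= s <= T -> forall i, Rabs (Vv s i) <= W1 + Hb * (2 * T).
  move=> s Hs i.
  have Hd1 : forall c, eps < c < s -> d c = 0.
    move=> c Hc; apply Hd; rewrite Rabs_right; lra.
  have := free_vel g h d x0 v0 X Vv i eps s Hb Hsol (proj1 Hs) Hd1.
  move=> /(_ (fun c Hc => Hh c ltac:(lra) i)) => H.
  have := Rabs_triang (Vv eps i) (Vv s i - Vv eps i).
  replace (Vv eps i + (Vv s i - Vv eps i)) with (Vv s i) by ring.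
  have : Hb * (s - eps) <= Hb * (2 * T) by apply Rmult_le_compat_l; lra.
  have := HW i; lra.
move=> s Hs i.
have HR : 0 <= W1 + Hb * (2 * T).
  have := Rabs_pos (Vv s i); have := HVb s Hs i; lra.
have := pos_lip g h d x0 v0 X Vv i eps s (W1 + Hb * (2 * T)) Hsol (proj1 Hs).
move=> /(_ (fun c Hc => HVb c ltac:(lra) i)) => H.
have : (W1 + Hb * (2 * T)) * (s - eps) <= (W1 + Hb * (2 * T)) * (2 * T).
  by apply Rmult_le_compat_l; lra.
lra.
Qed.

Lemma traj_limit {n : nat} (g : vec n -> vec n) h (delta : R -> R -> R)
  (x : R -> R -> vec n) (x0 v0 : vec n) (E0 V : R) :
  0 < E0 -> E0 < 1 -> 0 <= V ->
  (forall e, 0 < e <= E0 -> exists Vv, sol g h (delta e) x0 v0 (x e) Vv /\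
      (forall t, e < Rabs t -> delta e t = 0) /\
      (forall s, -1 <= s <= -e -> forall i, Rabs (Vv s i) <= V)) ->
  exists p : vec n, forall e, 0 < e <= E0 -> forall j, Rabs (x e (-e) j - p j) <= V * e.
Proof.
move=> HE HE1 HV Hs.
have : forall j, exists l, forall e, 0 < e -> e <= E0 -> Rabs (x e (-e) j - l) <= V * e.
  move=> j; apply (limit_point (fun e => x e (-e) j) V E0 HV HE).
  move=> e1 e2 He2 He21 He1.
  have [Vv1 [S1 [Z1 B1]]] := Hs e1 ltac:(lra).
  have [Vv2 [S2 [Z2 B2]]] := Hs e2 ltac:(lra).
  have Hz : forall c, -1 < c < -e1 -> delta e2 c = 0 /\ delta e1 c = 0.
    move=> c Hc; split; [apply Z2 | apply Z1]; rewrite Rabs_left; lra.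
  have := aff g h (delta e2) (delta e1) x0 v0 x0 v0 (x e2) Vv2 (x e1) Vv1 j (-e1) S2 S1 ltac:(lra) Hz.
  rewrite !Rminus_diag Rabs_R0 Rmult_0_r Rplus_0_l => HA.
  have := pos_lip g h (delta e2) x0 v0 (x e2) Vv2 j (-e1) (-e2) V S2 ltac:(lra).
  move=> /(_ (fun c Hc => B2 c ltac:(lra) j)) => HB.
  have := Rabs_triang (x e2 (-e2) j - x e2 (-e1) j) (x e2 (-e1) j - x e1 (-e1) j).
  replace (x e2 (- e2) j - x e2 (- e1) j + (x e2 (- e1) j - x e1 (- e1) j))
    with (x e2 (-e2) j - x e1 (-e1) j) by ring.
  have : V * (- e2 - - e1) <= V * e1 by apply Rmult_le_compat_l; lra.
  have := Rabs_pos (x e2 (- e1) j - x e1 (- e1) j).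
  lra.
move=> /fin_all_exists [p Hp]; exists p => e He j; apply Hp; lra.
Qed.

Lemma local {n : nat} (g : vec n -> vec n) (h : R -> vec n) (delta : R -> R -> R)
  (x : R -> vec n -> vec n -> R -> vec n) (K : vec n -> vec n -> Prop) (C eps0 epsK R0 : R) :
  (forall i, cont_Rm (fun y => g y i)) ->
  (forall i s, continuity_pt (fun t => h t i) s) ->
  (forall eps, 0 < eps <= 1 -> forall s, continuity_pt (delta eps) s) ->
  0 < C -> 0 < eps0 <= 1 ->
  (forall eps, 0 < eps <= eps0 -> (forall t, eps < Rabs t -> delta eps t = 0) /\
     (forall pr : Riemann_integrable (fun t => Rabs (delta eps t)) (-eps) eps, RiemannInt pr <= C)) ->
  0 < epsK <= 1 ->
  (forall x0 v0 eps, K x0 v0 -> 0 < eps <= epsK -> solves_ivp g h (delta eps) x0 v0 (x eps x0 v0)) ->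
  0 <= R0 ->
  (forall x0 v0, K x0 v0 -> forall j, Rabs (x0 j) <= R0 /\ Rabs (v0 j) <= R0) ->
  forall w : vec (n + n), K (q1 w) (q2 w) -> exists k : nat, exists r, 0 < r /\
    forall w', (forall j, Rabs (w' j - w j) < r) -> K (q1 w') (q2 w') ->
    forall eps, 0 < eps <= / (INR k + 1) -> forall s, Rabs s <= R0 + 1 -> forall i,
      Rabs (x eps (q1 w') (q2 w') s i) <= INR k.
Proof.
move=> Hgc Hhc Hdc HC Heps0 Hdel HepsK Hsolv HR0 HKb w Kw.
set T := R0 + 1.
have HT : 1 <= T by rewrite /T; lra.
set E0 := Rmin (Rmin epsK eps0) (1 / 2).
have HE0p : 0 < E0 by apply Rmin_glb_lt; [apply Rmin_glb_lt; lra | lra].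
have HE0K : E0 <= epsK by have := Rmin_l (Rmin epsK eps0) (1/2); have := Rmin_l epsK eps0; rewrite /E0; lra.
have HE00 : E0 <= eps0 by have := Rmin_l (Rmin epsK eps0) (1/2); have := Rmin_r epsK eps0; rewrite /E0; lra.
have HE02 : E0 <= 1 / 2 by have := Rmin_r (Rmin epsK eps0) (1/2); rewrite /E0; lra.
destruct (@fin_up n (fun a i => forall c, -T <= c <= T -> Rabs (h c i) <= a)) as [Hb0 HHb0].
  by move=> a b i Hab H c Hc; have := H c Hc; lra.
  move=> i; have [Mx [HMx _]] := continuity_ab_maj (fun t => Rabs (h t i)) (-T) T ltac:(lra)
    (fun c _ => continuity_pt_comp (fun t => h t i) Rabs c (Hhc i c) (Rcontinuity_abs _)).
  by exists (Rabs (h Mx i)).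
set Hb := Rmax Hb0 0.
have HHb : 0 <= Hb by apply Rmax_r.
have hbound : forall c, -T <= c <= T -> forall i, Rabs (h c i) <= Hb.
  move=> c Hc i; have := HHb0 i c Hc; have := Rmax_l Hb0 0; rewrite /Hb; lra.
set V := R0 + Hb * (2 * T).
have HV : 0 <= V by rewrite /V; have := Rmult_le_pos Hb (2 * T) HHb ltac:(lra); lra.
have Hsol_of : forall x0 v0 e, K x0 v0 -> 0 < e <= E0 -> exists Vv,
    sol g h (delta e) x0 v0 (x e x0 v0) Vv /\ (forall t, e < Rabs t -> delta e t = 0) /\
    (forall s, -T <= s <= -e -> forall i, Rabs (Vv s i) <= V /\ Rabs (x e x0 v0 s i - x0 i) <= V * (2 * T)).
  move=> x0 v0 e Kx He.
  have [Vv HVv] := Hsolv x0 v0 e Kx ltac:(lra).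
  have Hz := proj1 (Hdel e ltac:(lra)).
  exists Vv; split; first exact HVv; split; first exact Hz.
  have He1 : e < 1 by lra.
  move=> s Hs i; have := @free_phase n g h (delta e) x0 v0 (x e x0 v0) Vv e R0 T Hb HVv (proj1 He) He1 HT HHb Hz hbound (HKb x0 v0 Kx) s Hs i.
  by rewrite /V.
have [p Hp] : exists p : vec n, forall e, 0 < e <= E0 -> forall j,
    Rabs (x e (q1 w) (q2 w) (-e) j - p j) <= V * e.
  apply (traj_limit g h delta (fun e => x e (q1 w) (q2 w)) (q1 w) (q2 w) E0 V HE0p ltac:(lra) HV).
  move=> e He; have [Vv [S [Z B]]] := Hsol_of (q1 w) (q2 w) e Kw He.
  exists Vv; split; first exact S; split; first exact Z.
  move=> s Hs i; apply (B s ltac:(lra) i).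
destruct (@fin_down n (fun r i => forall y, (forall j, Rabs (y j - p j) < r) -> Rabs (g y i - g p i) < 1)) as [rho [Hrho Hg1]].
  by move=> a b i Ha Hab H y Hy; apply H => j; have := Hy j; lra.
  move=> i; have [r [Hr H]] := cont_box _ (Hgc i) p 1 ltac:(lra).
  by exists r; split.
destruct (@fin_up n (fun a i => Rabs (g p i) + 1 <= a)) as [G0 HG0].
  by move=> a b i Hab H; lra.
  by move=> i; exists (Rabs (g p i) + 1); lra.
set G := Rmax G0 0.
have HG : 0 <= G by apply Rmax_r.
have Hg : forall y, (forall j, Rabs (y j - p j) < rho) -> forall i, Rabs (g y i) <= G.
  move=> y Hy i; have := Hg1 i y Hy; have := HG0 i; have := Rmax_l G0 0.
  have := Rabs_triang (g y i - g p i) (g p i).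
  replace (g y i - g p i + g p i) with (g y i) by ring; rewrite /G; lra.
set W1 := V + G * C + Hb.
have HW1 : V <= W1 by rewrite /W1; have := Rmult_le_pos G C HG ltac:(lra); lra.
set E1 := Rmin E0 (rho / (16 * (W1 + 1))).
have HE1p : 0 < E1.
  apply Rmin_glb_lt => //; apply Rdiv_lt_0_compat => //; lra.
have HE1E0 : E1 <= E0 by apply Rmin_l.
have HE1r : E1 * (W1 + 1) <= rho / 16.
  have := Rmin_r E0 (rho / (16 * (W1 + 1))); rewrite -/E1 => H.
  have : E1 * (W1 + 1) <= rho / (16 * (W1 + 1)) * (W1 + 1) by apply Rmult_le_compat_r; lra.
  replace (rho / (16 * (W1 + 1)) * (W1 + 1)) with (rho / 16) by (field; lra); lra.
set B := R0 + V * (2 * T) + rho + (W1 + Hb * (2 * T)) * (2 * T).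
have [k Hk] := INR_unbounded (Rmax B (/ E1)).
have HkB : B <= INR k by have := Rmax_l B (/ E1); lra.
have Hk1 : / (INR k + 1) <= E1.
  have Hl : / E1 < INR k + 1 by have := Rmax_r B (/ E1); lra.
  have Hp1 : 0 < / E1 by apply Rinv_0_lt_compat.
  rewrite -(Rinv_inv E1); apply Rlt_le; apply Rinv_lt_contravar => //.
  apply Rmult_lt_0_compat => //; lra.
exists k, (rho / 16); split; first lra.
move=> w' Hw' Kw' eps Heps s Hs i.
have He : 0 < eps <= E0 by lra.
have HeE1 : eps <= E1 by lra.
have [Vv' [S' [Z' B']]] := Hsol_of (q1 w') (q2 w') eps Kw' He.
have [Vv [S [Z BB]]] := Hsol_of (q1 w) (q2 w) eps Kw He.
have [F [HF [HFc HFC]]] := prim_bound (delta eps) eps C (Hdc eps ltac:(lra)) ltac:(lra) ltac:(lra)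
  (proj2 (Hdel eps ltac:(lra))).
set X := x eps (q1 w') (q2 w').
have hb' : forall c, -eps <= c <= eps -> forall i, Rabs (h c i) <= Hb.
  move=> c Hc; apply hbound; lra.
have HV0 : forall i, Rabs (Vv' (-eps) i) <= V.
  move=> j; exact: (proj1 (B' (-eps) ltac:(lra) j)).
have Hstart : forall j, Rabs (X (-eps) j - p j) <= rho / 4.
  move=> j.
  have Hz : forall c, -1 < c < -eps -> delta eps c = 0 /\ delta eps c = 0.
    move=> c Hc; have H : delta eps c = 0 by apply Z; rewrite Rabs_left; lra.
    by split.
  have HA := aff g h (delta eps) (delta eps) (q1 w') (q2 w') (q1 w) (q2 w) X Vv'
    (x eps (q1 w) (q2 w)) Vv j (-eps) S' S ltac:(lra) Hz.
  have H1 : Rabs (q1 w' j - q1 w j) < rho / 16 := Hw' (lshift n j).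
  have H2 : Rabs (q2 w' j - q2 w j) < rho / 16 := Hw' (rshift n j).
  have H3 := Hp eps He j.
  have H4 : (- eps + 1) * Rabs (q2 w' j - q2 w j) <= rho / 16.
    have := Rabs_pos (q2 w' j - q2 w j).
    have : (- eps + 1) * Rabs (q2 w' j - q2 w j) <= 1 * Rabs (q2 w' j - q2 w j).
      apply Rmult_le_compat_r; [apply Rabs_pos | lra].
    lra.
  have H5 : V * eps <= rho / 16.
    have : V * eps <= (W1 + 1) * E1.
      apply Rmult_le_compat; lra.
    lra.
  have := Rabs_triang (X (-eps) j - x eps (q1 w) (q2 w) (-eps) j) (x eps (q1 w) (q2 w) (-eps) j - p j).
  replace (X (- eps) j - x eps (q1 w) (q2 w) (- eps) j + (x eps (q1 w) (q2 w) (- eps) j - p j))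
    with (X (-eps) j - p j) by ring.
  lra.
have Hsmall : (V + G * C + Hb * (2 * eps)) * (2 * eps) <= rho / 8.
  have : Hb * (2 * eps) <= Hb by have := Rmult_le_compat_l Hb (2 * eps) 1 HHb ltac:(lra); lra.
  move=> H; have : (V + G * C + Hb * (2 * eps)) * (2 * eps) <= (W1 + 1) * (2 * E1).
    apply Rmult_le_compat; rewrite ?/W1; try lra.
    have := Rmult_le_pos G C HG ltac:(lra); have := Rmult_le_pos Hb (2 * eps) HHb ltac:(lra); lra.
  lra.
have Hkick := @kick n g h (delta eps) (q1 w') (q2 w') X Vv' p eps rho G Hb C V F S'
  (proj1 Heps) Hrho HG HHb HV Hg hb' HF HFc HFC HV0 Hstart Hsmall.
have Hxm : forall i, Rabs (X (-eps) i) <= R0 + V * (2 * T).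
  move=> j; have := proj2 (B' (-eps) ltac:(lra) j); have := proj1 (HKb _ _ Kw' j).
  have := Rabs_triang (X (-eps) j - q1 w' j) (q1 w' j).
  replace (X (-eps) j - q1 w' j + q1 w' j) with (X (-eps) j) by ring; rewrite /X; lra.
have Hmid : forall s, -eps <= s <= eps -> forall i, Rabs (X s i) <= R0 + V * (2 * T) + rho.
  move=> s0 Hs0 j; have [_ H2] := Hkick s0 Hs0 j.
  have : (V + G * C + Hb * (2 * eps)) * (s0 + eps) <= (V + G * C + Hb * (2 * eps)) * (2 * eps).
    apply Rmult_le_compat_l; last lra.
    have := Rmult_le_pos G C HG ltac:(lra); have := Rmult_le_pos Hb (2 * eps) HHb ltac:(lra); lra.
  have := Hxm j.
  have := Rabs_triang (X s0 j - X (-eps) j) (X (-eps) j).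
  replace (X s0 j - X (-eps) j + X (-eps) j) with (X s0 j) by ring; lra.
have HposB : 0 <= (W1 + Hb * (2 * T)) * (2 * T).
  apply Rmult_le_pos; last lra.
  have := Rmult_le_pos Hb (2 * T) HHb ltac:(lra); lra.
have Hs' : -T <= s <= T by have := Rle_abs s; have := Rle_abs (- s); rewrite Rabs_Ropp; rewrite /T in Hs *; lra.
suff : Rabs (X s i) <= B by rewrite /X; lra.
case: (Rle_lt_dec s (-eps)) => Hs1.
  have := proj2 (B' s ltac:(lra) i); have := proj1 (HKb _ _ Kw' i).
  have := Rabs_triang (X s i - q1 w' i) (q1 w' i).
  replace (X s i - q1 w' i + q1 w' i) with (X s i) by ring; rewrite /B /X; lra.
case: (Rle_lt_dec s eps) => Hs2.
  have := Hmid s ltac:(lra) i; rewrite /B; lra.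
have HVeps : forall j, Rabs (Vv' eps j) <= W1.
  move=> j; have [H1 _] := Hkick eps ltac:(lra) j; have := HV0 j.
  have : Hb * (2 * eps) <= Hb by have := Rmult_le_compat_l Hb (2 * eps) 1 HHb ltac:(lra); lra.
  have := Rabs_triang (Vv' (-eps) j) (Vv' eps j - Vv' (-eps) j).
  replace (Vv' (-eps) j + (Vv' eps j - Vv' (-eps) j)) with (Vv' eps j) by ring.
  rewrite /W1; lra.
have Hpost := @post_phase n g h (delta eps) (q1 w') (q2 w') X Vv' eps T Hb W1 S' (proj1 Heps)
  ltac:(lra) HHb Z' hbound HVeps s ltac:(lra) i.
have := Hmid eps ltac:(lra) i.
have := Rabs_triang (X s i - X eps i) (X eps i).
replace (X s i - X eps i + X eps i) with (X s i) by ring; rewrite /B; lra.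
Qed.


Theorem proposition4p3 (n : nat) (g : vec n -> vec n) (h : R -> vec n)
  (delta : R -> R -> R) (x : R -> vec n -> vec n -> R -> vec n) :
  smooth_map g ->
  (forall i : 'I_n, smooth_R (fun t => h t i)) ->
  (forall eps, 0 < eps <= 1 -> smooth_R (delta eps)) ->
  (exists C, 0 < C /\ exists eps0, 0 < eps0 <= 1 /\
     forall eps, 0 < eps <= eps0 ->
       (forall t, eps < Rabs t -> delta eps t = 0) /\
       (forall pr : Riemann_integrable (fun t => Rabs (delta eps t)) (- eps) eps,
          RiemannInt pr <= C)) ->
  asymptotic_solution g h delta x ->
  forall M : vec n -> vec n -> R -> Prop,
    compact_Rm (fun w : vec (n + n + 1) => M (p1 w) (p2 w) (p3 w)) ->
    exists CM, 0 < CM /\ exists eps1, 0 < eps1 <= 1 /\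
      forall eps, 0 < eps <= eps1 ->
        forall x0 v0 t, M x0 v0 t -> vnorm (x eps x0 v0 t) <= CM.
Proof.
move=> Hg Hh Hd [C [HC [eps0 [Heps0 Hdel]]]] [_ HAS] M HM.
have [R1 [HR1 HR1b]] := compact_bounded _ HM.
have HMb : forall a b t, M a b t -> (forall j, Rabs (a j) <= R1 /\ Rabs (b j) <= R1) /\ Rabs t <= R1.
  move=> a b t Hab.
  have Hw : M (p1 (ext (join2 a b) t)) (p2 (ext (join2 a b) t)) (p3 (ext (join2 a b) t)).
    by rewrite p1_ext p2_ext p3_ext q1_join q2_join.
  have Hb3 := HR1b _ Hw.
  split.
  - move=> j; split.
    + have -> : a j = p1 (ext (join2 a b) t) j by rewrite p1_ext q1_join.
      apply Hb3.
    + have -> : b j = p2 (ext (join2 a b) t) j by rewrite p2_ext q2_join.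
      apply Hb3.
  - have -> : t = p3 (ext (join2 a b) t) by rewrite p3_ext.
    apply Hb3.
pose K := fun a b => exists t, M a b t.
have HK : compact_Rm (fun w : vec (n + n) => K (q1 w) (q2 w)) := compact_proj M HM.
have [epsK [HepsK Hsolv]] := HAS K HK.
have Hgc : forall i, cont_Rm (fun y => g y i) := fun i => Hg i 0%nat.
have Hhc : forall i s, continuity_pt (fun t => h t i) s := fun i => smoothR_cont _ (Hh i).
have Hdc : forall eps, 0 < eps <= 1 -> forall s, continuity_pt (delta eps) s :=
  fun eps He => smoothR_cont _ (Hd eps He).
have HKb : forall x0 v0, K x0 v0 -> forall j, Rabs (x0 j) <= R1 /\ Rabs (v0 j) <= R1.
  by move=> x0 v0 [t Ht]; apply (HMb _ _ _ Ht).
have Hloc := local g h delta x K C eps0 epsK R1 Hgc Hhc Hdc HC Heps0 Hdel HepsK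
  (fun x0 v0 eps Kx He => Hsolv x0 v0 eps Kx He) HR1 HKb.
destruct (HK nat (fun k w => exists r, 0 < r /\
    forall w', (forall j, Rabs (w' j - w j) < r) -> K (q1 w') (q2 w') ->
    forall eps, 0 < eps <= / (INR k + 1) -> forall s, Rabs s <= R1 + 1 -> forall i,
      Rabs (x eps (q1 w') (q2 w') s i) <= INR k)) as [l Hl].
- move=> k w [r [Hr Hw]]; exists (r / 2); split; first lra.
  move=> y Hy; exists (r / 2); split; first lra.
  move=> w' Hw'; apply Hw => j.
  have := coord_le_vnorm (vsub y w) j; rewrite /vsub => H1.
  have := Hw' j; have := Rabs_triang (w' j - y j) (y j - w j).
  replace (w' j - y j + (y j - w j)) with (w' j - w j) by ring.
  have : Rabs (y j - w j) < r / 2.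
    apply: Rle_lt_trans _ Hy; exact: (coord_le_vnorm (vsub y w) j).
  lra.
- move=> w Kw; have [k Hk] := Hloc w Kw; by exists k.
- set N := fold_right Nat.add 0%nat l.
  have HN := pos_INR N.
  exists (sqrt (INR n * (INR N * INR N)) + 1); split.
    have := sqrt_pos (INR n * (INR N * INR N)); lra.
  exists (/ (INR N + 1)); split.
    split; first by apply Rinv_0_lt_compat; lra.
    rewrite -Rinv_1; apply Rinv_le_contravar; lra.
  move=> eps Heps x0 v0 t Hm.
  have Kw : K (q1 (join2 x0 v0)) (q2 (join2 x0 v0)) by rewrite q1_join q2_join; exists t.
  have [k [Hkl [r [Hr Hk]]]] := Hl _ Kw.
  have HkN : INR k <= INR N by apply le_INR; apply in_le_sum.
  have Hbd : forall i, Rabs (x eps x0 v0 t i) <= INR N.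
    move=> i.
    have Ht : Rabs t <= R1 + 1 by have := proj2 (HMb _ _ _ Hm); lra.
    have Heps' : 0 < eps <= / (INR k + 1).
      split; first lra.
      apply: Rle_trans (proj2 Heps) _; apply Rinv_le_contravar; [have := pos_INR k; lra | lra].
    have Hz : forall j, Rabs (join2 x0 v0 j - join2 x0 v0 j) < r.
      by move=> j; rewrite Rminus_diag Rabs_R0.
    have := Hk (join2 x0 v0) Hz Kw eps Heps' t Ht i.
    rewrite q1_join q2_join; lra.
  have := box_vnorm _ _ Hbd; lra.
Qed.
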